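(* Let $-\infty\le a<b\le\infty$, let $f,g$ be differentiable on $(a,b)$ with $g'\neq0$ and $g>0$ on $(a,b)$, and let $H_{f,g}=\frac{f'}{g'}g-f$. Assume $f'/g'$ is strictly monotone on $(a,b)$ (so that $H_{f,g}(a^+)=\lim_{x\to a^+}H_{f,g}(x)$ and $H_{f,g}(b^-)=\lim_{x\to b^-}H_{f,g}(x)$ exist in $[-\infty,\infty]$). (i) If $g'>0$ (resp. $g'<0$) on $(a,b)$, then $(f/g)'>0$ (resp. $(f/g)'<0$) on all of $(a,b)$ if and only if $\min(H_{f,g}(a^+),H_{f,g}(b^-))\ge 0$. (ii) If $g'>0$ (resp. $g'<0$) on $(a,b)$, then $(f/g)'<0$ (resp. $(f/g)'>0$) on all of $(a,b)$ if and only if $\max(H_{f,g}(a^+),H_{f,g}(b^-))\le 0$. (iii) If $f'/g'$ is strictly increasing on $(a,b)$, $H_{f,g}(a^+)<0$ and $H_{f,g}(b^-)>0$, then there is a unique $x_0\in(a,b)$ such that, when $g'>0$, $(f/g)'<0$ on $(a,x_0)$ and $(f/g)'>0$ on $(x_0,b)$; and when $g'<0$, $(f/g)'>0$ on $(a,x_0)$ and $(f/g)'<0$ on $(x_0,b)$. (iv) If $f'/g'$ is strictly decreasing on $(a,b)$, $H_{f,g}(a^+)>0$ and $H_{f,g}(b^-)<0$, then there is a unique $x_0\in(a,b)$ such that, when $g'>0$, $(f/g)'>0$ on $(a,x_0)$ and $(f/g)'<0$ on $(x_0,b)$; and when $g'<0$, $(f/g)'<0$ on $(a,x_0)$ and $(f/g)'>0$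 on $(x_0,b)$.
   Context: For differentiable $f,g$ on $(a,b)$ with $g'\ne 0$ there, $H_{f,g}(x)=\frac{f'(x)}{g'(x)}g(x)-f(x)$; $H_{f,g}(a^+)$, $H_{f,g}(b^-)$ denote its one-sided limits at the endpoints (possibly infinite). *)

(* Defs.v *)
From Stdlib Require Import Reals Lra.
Open Scope R_scope.

Inductive ER : Type :=
| Fin : R -> ER
| PInf : ER
| MInf : ER.

Definition ER_lt (x y : ER) : Prop :=
  match x, y with
  | Fin a, Fin b => a < b
  | MInf, Fin _ | MInf, PInf | Fin _, PInf => True
  | _, _ => False
  end.

Definition ER_le (x y : ER) : Prop :=
  match x, y with
  | Fin a, Fin b => a <= b
  | MInf, _ | _, PInf => True
  | _, _ => False
  end.

Definition in_oi (a b : ER) (x : R) : Prop := ER_lt a (Fin x) /\ ER_lt (Fin x) b.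

Definition near_left (a b : ER) (P : R -> Prop) : Prop :=
  exists c : R, in_oi a b c /\ forall x, ER_lt a (Fin x) -> x < c -> P x.

Definition near_right (a b : ER) (P : R -> Prop) : Prop :=
  exists c : R, in_oi a b c /\ forall x, c < x -> ER_lt (Fin x) b -> P x.

Definition lim_along (near : (R -> Prop) -> Prop) (h : R -> R) (L : ER) : Prop :=
  match L with
  | Fin l => forall eps, 0 < eps -> near (fun x => Rabs (h x - l) < eps)
  | PInf => forall M, near (fun x => M < h x)
  | MInf => forall M, near (fun x => h x < M)
  end.

Definition lim_a_plus (a b : ER) (h : R -> R) (L : ER) : Prop := lim_along (near_left a b) h L.
Definition lim_b_minus (a b : ER) (h : R -> R) (L : ER) : Prop := lim_along (near_right a b) h L.

Definition H_fg (f g f' g' : R -> R) (x : R) : R := f' x / g' x * g x - f x.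

Definition quot_deriv_pos (f g : R -> R) (x : R) : Prop :=
  exists l, derivable_pt_lim (fun t => f t / g t) x l /\ 0 < l.
Definition quot_deriv_neg (f g : R -> R) (x : R) : Prop :=
  exists l, derivable_pt_lim (fun t => f t / g t) x l /\ l < 0.

Definition strict_incr_on (a b : ER) (r : R -> R) : Prop :=
  forall x y, in_oi a b x -> in_oi a b y -> x < y -> r x < r y.
Definition strict_decr_on (a b : ER) (r : R -> R) : Prop :=
  forall x y, in_oi a b x -> in_oi a b y -> x < y -> r y < r x.

(* Main.v *)
Require Import Defs.
From Stdlib Require Import Reals Lra.
Open Scope R_scope.

Lemma lt_a_trans a x y : ER_lt a (Fin x) -> x <= y -> ER_lt a (Fin y).
Proof. destruct a; simpl; intros; auto; lra. Qed.
Lemma lt_b_trans b x y : ER_lt (Fin y) b -> x <= y -> ER_lt (Fin x) b.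
Proof. destruct b; simpl; intros; auto; lra. Qed.
Lemma ex_left a c : ER_lt a (Fin c) -> exists z, ER_lt a (Fin z) /\ z < c.
Proof. destruct a as [a0| |]; simpl; intros H.
  - exists ((a0+c)/2); simpl; lra. - contradiction. - exists (c-1); split; auto; lra. Qed.
Lemma ex_right b c : ER_lt (Fin c) b -> exists z, c < z /\ ER_lt (Fin z) b.
Proof. destruct b as [b0| |]; simpl; intros H.
  - exists ((b0+c)/2); simpl; lra. - exists (c+1); split; auto; lra. - contradiction. Qed.

Definition proper_near (a b : ER) (near : (R -> Prop) -> Prop) :=
  forall P, near P -> exists z, in_oi a b z /\ P z.

Lemma proper_left a b : proper_near a b (near_left a b).
Proof. intros P [c [[Hac Hcb] HP]]. destruct (ex_left a c Hac) as [z [Hz1 Hz2]].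
  exists z; split; [split; auto; apply lt_b_trans with c; auto; lra| apply HP; auto]. Qed.
Lemma proper_right a b : proper_near a b (near_right a b).
Proof. intros P [c [[Hac Hcb] HP]]. destruct (ex_right b c Hcb) as [z [Hz1 Hz2]].
  exists z; split; [split; auto; apply lt_a_trans with c; auto; lra| apply HP; auto]. Qed.

Lemma le_of_near (near : (R -> Prop) -> Prop) h L v :
  (forall P, near P -> exists z, P z /\ h z <= v) -> lim_along near h L -> ER_le L (Fin v).
Proof. intros Hn Hl. destruct L as [l| |]; simpl in *; auto.
  - destruct (Rle_dec l v) as [|Hlv]; auto. exfalso.
    destruct (Hn _ (Hl (l - v) ltac:(lra))) as [z [Hz1 Hz2]].
    apply Rabs_def2 in Hz1; lra.
  - destruct (Hn _ (Hl v)) as [z [Hz1 Hz2]]; lra. Qed.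
Lemma ge_of_near (near : (R -> Prop) -> Prop) h L v :
  (forall P, near P -> exists z, P z /\ v <= h z) -> lim_along near h L -> ER_le (Fin v) L.
Proof. intros Hn Hl. destruct L as [l| |]; simpl in *; auto.
  - destruct (Rle_dec v l) as [|Hlv]; auto. exfalso.
    destruct (Hn _ (Hl (v - l) ltac:(lra))) as [z [Hz1 Hz2]].
    apply Rabs_def2 in Hz1; lra.
  - destruct (Hn _ (Hl v)) as [z [Hz1 Hz2]]; lra. Qed.

Lemma lim_ge0 a b near h L : proper_near a b near -> lim_along near h L ->
  (forall x, in_oi a b x -> 0 < h x) -> ER_le (Fin 0) L.
Proof. intros Hp Hl Hh. apply (ge_of_near near h); auto. intros P HP.
  destruct (Hp P HP) as [z [Hz Pz]]. exists z; split; auto. left; auto. Qed.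
Lemma lim_le0 a b near h L : proper_near a b near -> lim_along near h L ->
  (forall x, in_oi a b x -> h x < 0) -> ER_le L (Fin 0).
Proof. intros Hp Hl Hh. apply (le_of_near near h); auto. intros P HP.
  destruct (Hp P HP) as [z [Hz Pz]]. exists z; split; auto. left; auto. Qed.

Lemma ER_le_lt_trans L v w : ER_le L (Fin v) -> v < w -> ER_lt L (Fin w).
Proof. destruct L; simpl; auto; lra. Qed.
Lemma ER_lt_le_trans L v w : ER_le (Fin w) L -> v < w -> ER_lt (Fin v) L.
Proof. destruct L; simpl; auto; lra. Qed.

Lemma left_below a b P y : in_oi a b y -> near_left a b P -> exists z, in_oi a b z /\ z < y /\ P z.
Proof. intros [Hay Hyb] [c [[Hac Hcb] HP]].
  destruct (ex_left a (Rmin c y)) as [z [Hz1 Hz2]].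
  { unfold Rmin; destruct (Rle_dec c y); auto. }
  assert (z < c /\ z < y) by (unfold Rmin in Hz2; destruct (Rle_dec c y); lra).
  exists z; split; [split; auto; apply lt_b_trans with y; auto; lra|split;[lra|apply HP; auto; lra]]. Qed.
Lemma right_above a b P y : in_oi a b y -> near_right a b P -> exists z, in_oi a b z /\ y < z /\ P z.
Proof. intros [Hay Hyb] [c [[Hac Hcb] HP]].
  destruct (ex_right b (Rmax c y)) as [z [Hz1 Hz2]].
  { unfold Rmax; destruct (Rle_dec c y); auto. }
  assert (c < z /\ y < z) by (unfold Rmax in Hz1; destruct (Rle_dec c y); lra).
  exists z; split; [split; auto; apply lt_a_trans with y; auto; lra|split;[lra|apply HP; auto; lra]]. Qed.

Lemma incr_boundA a b h L x : strict_incr_on a b h -> lim_a_plus a b h L -> in_oi a b x -> ER_lt L (Fin (h x)).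
Proof. intros Hm Hl Hx. destruct (left_below a b (fun _ => True) x Hx) as [y [Hy [Hyx _]]].
  { destruct Hx as [H1 H2]. exists x; split; [split; auto|]; auto. }
  apply ER_le_lt_trans with (h y); [|apply Hm; auto].
  apply (le_of_near (near_left a b) h); auto. intros P HP.
  destruct (left_below a b P y Hy HP) as [z [Hz [Hzy Pz]]]. exists z; split; auto.
  left; apply Hm; auto. Qed.

Lemma incr_boundB a b h L x : strict_incr_on a b h -> lim_b_minus a b h L -> in_oi a b x -> ER_lt (Fin (h x)) L.
Proof. intros Hm Hl Hx. destruct (right_above a b (fun _ => True) x Hx) as [y [Hy [Hyx _]]].
  { destruct Hx as [H1 H2]. exists x; split; [split; auto|]; auto. }
  apply ER_lt_le_trans with (h y); [|apply Hm; auto].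
  apply (ge_of_near (near_right a b) h); auto. intros P HP.
  destruct (right_above a b P y Hy HP) as [z [Hz [Hzy Pz]]]. exists z; split; auto.
  left; apply Hm; auto. Qed.
Lemma decr_boundA a b h L x : strict_decr_on a b h -> lim_a_plus a b h L -> in_oi a b x -> ER_lt (Fin (h x)) L.
Proof. intros Hm Hl Hx. destruct (left_below a b (fun _ => True) x Hx) as [y [Hy [Hyx _]]].
  { destruct Hx as [H1 H2]. exists x; split; [split; auto|]; auto. }
  apply ER_lt_le_trans with (h y); [|apply Hm; auto].
  apply (ge_of_near (near_left a b) h); auto. intros P HP.
  destruct (left_below a b P y Hy HP) as [z [Hz [Hzy Pz]]]. exists z; split; auto.
  left; apply Hm; auto. Qed.
Lemma decr_boundB a b h L x : strict_decr_on a b h -> lim_b_minus a b h L -> in_oi a b x -> ER_lt L (Fin (h x)).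
Proof. intros Hm Hl Hx. destruct (right_above a b (fun _ => True) x Hx) as [y [Hy [Hyx _]]].
  { destruct Hx as [H1 H2]. exists x; split; [split; auto|]; auto. }
  apply ER_le_lt_trans with (h y); [|apply Hm; auto].
  apply (le_of_near (near_right a b) h); auto. intros P HP.
  destruct (right_above a b P y Hy HP) as [z [Hz [Hzy Pz]]]. exists z; split; auto.
  left; apply Hm; auto. Qed.

Lemma ER_lt_of_le_lt L v w : ER_le (Fin v) L -> ER_lt L (Fin w) -> v < w.
Proof. destruct L; simpl; intros; try contradiction; lra. Qed.
Lemma ER_lt_of_lt_le L v w : ER_lt (Fin v) L -> ER_le L (Fin w) -> v < w.
Proof. destruct L; simpl; intros; try contradiction; lra. Qed.

Lemma K1 a b h LA LB : (strict_incr_on a b h \/ strict_decr_on a b h) ->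
  lim_a_plus a b h LA -> lim_b_minus a b h LB ->
  ((forall x, in_oi a b x -> 0 < h x) <-> (ER_le (Fin 0) LA /\ ER_le (Fin 0) LB)).
Proof. intros Hm HA HB. split.
  - intros Hp; split; [apply (lim_ge0 a b (near_left a b) h); auto; apply proper_left
                      |apply (lim_ge0 a b (near_right a b) h); auto; apply proper_right].
  - intros [H1 H2] x Hx. destruct Hm as [Hm|Hm].
    + exact (ER_lt_of_le_lt LA 0 (h x) H1 (incr_boundA a b h LA x Hm HA Hx)).
    + exact (ER_lt_of_le_lt LB 0 (h x) H2 (decr_boundB a b h LB x Hm HB Hx)).
Qed.
Lemma K2 a b h LA LB : (strict_incr_on a b h \/ strict_decr_on a b h) ->
  lim_a_plus a b h LA -> lim_b_minus a b h LB ->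
  ((forall x, in_oi a b x -> h x < 0) <-> (ER_le LA (Fin 0) /\ ER_le LB (Fin 0))).
Proof. intros Hm HA HB. split.
  - intros Hp; split; [apply (lim_le0 a b (near_left a b) h); auto; apply proper_left
                      |apply (lim_le0 a b (near_right a b) h); auto; apply proper_right].
  - intros [H1 H2] x Hx. destruct Hm as [Hm|Hm].
    + exact (ER_lt_of_lt_le LB (h x) 0 (incr_boundB a b h LB x Hm HB Hx) H2).
    + exact (ER_lt_of_lt_le LA (h x) 0 (decr_boundA a b h LA x Hm HA Hx) H1).
Qed.
Lemma nearA_neg a b h L : lim_a_plus a b h L -> ER_lt L (Fin 0) -> near_left a b (fun x => h x < 0).
Proof. intros Hl HL. destruct L as [l| |]; simpl in *; try contradiction.
  - destruct (Hl (-l) ltac:(lra)) as [c [Hc HP]]. exists c; split; auto.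
    intros x H1 H2; specialize (HP x H1 H2); apply Rabs_def2 in HP; lra.
  - destruct (Hl 0) as [c [Hc HP]]. exists c; split; auto. Qed.
Lemma nearB_pos a b h L : lim_b_minus a b h L -> ER_lt (Fin 0) L -> near_right a b (fun x => 0 < h x).
Proof. intros Hl HL. destruct L as [l| |]; simpl in *; try contradiction.
  - destruct (Hl l ltac:(lra)) as [c [Hc HP]]. exists c; split; auto.
    intros x H1 H2; specialize (HP x H1 H2); apply Rabs_def2 in HP; lra.
  - destruct (Hl 0) as [c [Hc HP]]. exists c; split; auto. Qed.
Lemma nearA_pos a b h L : lim_a_plus a b h L -> ER_lt (Fin 0) L -> near_left a b (fun x => 0 < h x).
Proof. intros Hl HL. destruct L as [l| |]; simpl in *; try contradiction.
  - destruct (Hl l ltac:(lra)) as [c [Hc HP]]. exists c; split; auto.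
    intros x H1 H2; specialize (HP x H1 H2); apply Rabs_def2 in HP; lra.
  - destruct (Hl 0) as [c [Hc HP]]. exists c; split; auto. Qed.
Lemma nearB_neg a b h L : lim_b_minus a b h L -> ER_lt L (Fin 0) -> near_right a b (fun x => h x < 0).
Proof. intros Hl HL. destruct L as [l| |]; simpl in *; try contradiction.
  - destruct (Hl (-l) ltac:(lra)) as [c [Hc HP]]. exists c; split; auto.
    intros x H1 H2; specialize (HP x H1 H2); apply Rabs_def2 in HP; lra.
  - destruct (Hl 0) as [c [Hc HP]]. exists c; split; auto. Qed.

Lemma K3 a b h : strict_incr_on a b h -> near_left a b (fun x => h x < 0) ->
  near_right a b (fun x => 0 < h x) ->
  exists! x0, in_oi a b x0 /\ (forall x, ER_lt a (Fin x) -> x < x0 -> h x < 0) /\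
     (forall x, x0 < x -> ER_lt (Fin x) b -> 0 < h x).
Proof.
  intros Hm HL HR.
  set (E := fun x => in_oi a b x /\ h x < 0).
  destruct HR as [c [[Hac Hcb] HPc]].
  assert (Hb : bound E).
  { exists c. intros x [[H1 H2] H3]. destruct (Rle_dec x c) as [|Hn]; auto.
    specialize (HPc x ltac:(lra) H2); lra. }
  assert (He : exists x, E x).
  { destruct (proper_left a b _ HL) as [z [Hz Pz]]. exists z; split; auto. }
  destruct (completeness E Hb He) as [m [Hub Hlub]].
  destruct He as [z0 [[Hz01 Hz02] Hz03]].
  assert (Hz0m : z0 <= m) by (apply Hub; split; [split|]; auto).
  assert (Hmc : m <= c).
  { apply Hlub. intros x [[H1 H2] H3]. destruct (Rle_dec x c) as [|Hn]; auto.
    specialize (HPc x ltac:(lra) H2); lra. }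
  assert (Hm_in : in_oi a b m).
  { split; [apply lt_a_trans with z0; auto| apply lt_b_trans with c; auto]. }
  assert (Lft : forall x, ER_lt a (Fin x) -> x < m -> h x < 0).
  { intros x H1 H2.
    destruct (Classical_Prop.classic (exists y, E y /\ x < y)) as [[y [[Hy Hy2] Hxy]]|Hn].
    - assert (in_oi a b x) by (split; auto; apply lt_b_trans with m; [apply Hm_in|lra]).
      specialize (Hm x y H Hy Hxy); lra.
    - exfalso. assert (m <= x); [|lra]. apply Hlub. intros y Ey.
      destruct (Rle_dec y x) as [|Hn2]; auto. exfalso; apply Hn; exists y; split; auto; lra. }
  assert (Rgt : forall x, m < x -> ER_lt (Fin x) b -> 0 < h x).
  { intros x H1 H2. set (z := (m + x) / 2).
    assert (Hzin : in_oi a b z) by (split; [apply lt_a_trans with m; [apply Hm_in|unfold z; lra]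
                                           |apply lt_b_trans with x; auto; unfold z; lra]).
    assert (Hxin : in_oi a b x) by (split; auto; apply lt_a_trans with m; [apply Hm_in|lra]).
    assert (0 <= h z).
    { destruct (Rle_dec 0 (h z)) as [|Hn]; auto. exfalso.
      assert (z <= m) by (apply Hub; split; auto; lra). unfold z in *; lra. }
    specialize (Hm z x Hzin Hxin ltac:(unfold z; lra)); lra. }
  exists m; split; [split; auto|].
  intros x1 [Hx1 [L1 R1]].
  destruct (Rtotal_order x1 m) as [Hlt|[Heq|Hgt]]; auto.
  - set (z := (x1 + m) / 2).
    assert (Hzin : in_oi a b z) by (split; [apply lt_a_trans with x1; [apply Hx1|unfold z; lra]
                                           |apply lt_b_trans with m; [apply Hm_in|unfold z; lra]]).
    specialize (Lft z (proj1 Hzin) ltac:(unfold z; lra)).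
    specialize (R1 z ltac:(unfold z; lra) (proj2 Hzin)). lra.
  - set (z := (x1 + m) / 2).
    assert (Hzin : in_oi a b z) by (split; [apply lt_a_trans with m; [apply Hm_in|unfold z; lra]
                                           |apply lt_b_trans with x1; [apply Hx1|unfold z; lra]]).
    specialize (L1 z (proj1 Hzin) ltac:(unfold z; lra)).
    specialize (Rgt z ltac:(unfold z; lra) (proj2 Hzin)). lra.
Qed.

Lemma K4 a b h : strict_decr_on a b h -> near_left a b (fun x => 0 < h x) ->
  near_right a b (fun x => h x < 0) ->
  exists! x0, in_oi a b x0 /\ (forall x, ER_lt a (Fin x) -> x < x0 -> 0 < h x) /\
     (forall x, x0 < x -> ER_lt (Fin x) b -> h x < 0).
Proof.
  intros Hm [c1 [H1 P1]] [c2 [H2 P2]].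
  destruct (K3 a b (fun x => - h x)) as [x0 [[Hx0 [L R]] U]].
  - intros x y Hx Hy Hxy; specialize (Hm x y Hx Hy Hxy); lra.
  - exists c1; split; auto; intros x A B; specialize (P1 x A B); lra.
  - exists c2; split; auto; intros x A B; specialize (P2 x A B); lra.
  - exists x0; split.
    + split; auto; split; intros x A B; [specialize (L x A B)|specialize (R x A B)]; lra.
    + intros x1 [Hx1 [L1 R1]]. apply U. split; auto; split; intros x A B;
        [specialize (L1 x A B)|specialize (R1 x A B)]; lra.
Qed.
Section D.
Variables (a b : ER) (f g f' g' : R -> R).
Hypothesis Hf : forall x, in_oi a b x -> derivable_pt_lim f x (f' x).
Hypothesis Hg : forall x, in_oi a b x -> derivable_pt_lim g x (g' x).
Hypothesis Hg'0 : forall x, in_oi a b x -> g' x <> 0.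
Hypothesis Hgp : forall x, in_oi a b x -> 0 < g x.

Lemma cauchy x y : in_oi a b x -> in_oi a b y -> x < y ->
  exists c, x < c < y /\ f y - f x = f' c / g' c * (g y - g x).
Proof.
  intros Hx Hy Hxy.
  destruct (MVT_cor2 (fun t => (g y - g x) * f t - (f y - f x) * g t)
     (fun t => (g y - g x) * f' t - (f y - f x) * g' t) x y Hxy) as [c [Hc1 Hc2]].
  { intros c Hc. assert (Hcin : in_oi a b c).
    { split; [apply lt_a_trans with x; [apply Hx|lra]|apply lt_b_trans with y; [apply Hy|lra]]. }
    apply (derivable_pt_lim_minus (mult_real_fct (g y - g x) f) (mult_real_fct (f y - f x) g));
    apply derivable_pt_lim_scal; auto. }
  assert (Hcin : in_oi a b c).
  { split; [apply lt_a_trans with x; [apply Hx|lra]|apply lt_b_trans with y; [apply Hy|lra]]. }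
  exists c; split; auto.
  assert (E : (g y - g x) * f' c - (f y - f x) * g' c = 0).
  { assert (Hz : ((g y - g x) * f' c - (f y - f x) * g' c) * (y - x) = 0) by lra.
    apply Rmult_integral in Hz; destruct Hz; auto; lra. }
  specialize (Hg'0 c Hcin). apply Rminus_diag_uniq in E. replace (f' c / g' c * (g y - g x)) with ((g y - g x) * f' c / g' c) by (field; auto). rewrite E. field; auto.
Qed.

Lemma H_incr : strict_incr_on a b (fun x => f' x / g' x) -> strict_incr_on a b (H_fg f g f' g').
Proof. intros Hm x y Hx Hy Hxy. destruct (cauchy x y Hx Hy Hxy) as [c [Hc E]].
  assert (Hcin : in_oi a b c).
  { split; [apply lt_a_trans with x; [apply Hx|lra]|apply lt_b_trans with y; [apply Hy|lra]]. }
  unfold H_fg. set (r := fun x => f' x / g' x) in *. change (f' c / g' c) with (r c) in E.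
  change (f' y / g' y) with (r y); change (f' x / g' x) with (r x).
  pose proof (Hm x c Hx Hcin ltac:(lra)). pose proof (Hm c y Hcin Hy ltac:(lra)).
  pose proof (Hgp x Hx); pose proof (Hgp y Hy).
  assert (0 < (r y - r c) * g y) by (apply Rmult_lt_0_compat; lra).
  assert (0 < (r c - r x) * g x) by (apply Rmult_lt_0_compat; lra).
  assert (f y = f x + r c * (g y - g x)) by lra. rewrite H5. nra. Qed.

Lemma H_decr : strict_decr_on a b (fun x => f' x / g' x) -> strict_decr_on a b (H_fg f g f' g').
Proof. intros Hm x y Hx Hy Hxy. destruct (cauchy x y Hx Hy Hxy) as [c [Hc E]].
  assert (Hcin : in_oi a b c).
  { split; [apply lt_a_trans with x; [apply Hx|lra]|apply lt_b_trans with y; [apply Hy|lra]]. }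
  unfold H_fg. set (r := fun x => f' x / g' x) in *. change (f' c / g' c) with (r c) in E.
  change (f' y / g' y) with (r y); change (f' x / g' x) with (r x).
  pose proof (Hm x c Hx Hcin ltac:(lra)). pose proof (Hm c y Hcin Hy ltac:(lra)).
  pose proof (Hgp x Hx); pose proof (Hgp y Hy).
  assert (0 < (r c - r y) * g y) by (apply Rmult_lt_0_compat; lra).
  assert (0 < (r x - r c) * g x) by (apply Rmult_lt_0_compat; lra).
  assert (f y = f x + r c * (g y - g x)) by lra. rewrite H5. nra. Qed.

Lemma qd x : in_oi a b x -> derivable_pt_lim (fun t => f t / g t) x
   (g' x * H_fg f g f' g' x / (g x)²).
Proof. intros Hx. pose proof (Hgp x Hx). pose proof (Hg'0 x Hx).
  replace (g' x * H_fg f g f' g' x / (g x)²) with ((f' x * g x - g' x * f x) / (g x)²).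
  - apply (derivable_pt_lim_div f g); auto; lra.
  - unfold H_fg, Rsqr. field; lra. Qed.

Lemma sgn_pos x : in_oi a b x -> (quot_deriv_pos f g x <-> 0 < g' x * H_fg f g f' g' x).
Proof. intros Hx. pose proof (Hgp x Hx). assert (0 < (g x)²) by (unfold Rsqr; nra).
  split.
  - intros [l [Hl Hp]]. rewrite (uniqueness_limite _ _ _ _ Hl (qd x Hx)) in Hp.
    unfold Rdiv in Hp. pose proof (Rinv_0_lt_compat _ H0). nra.
  - intros Hp. exists (g' x * H_fg f g f' g' x / (g x)²); split; [apply qd; auto|].
    apply Rdiv_lt_0_compat; auto. Qed.
Lemma sgn_neg x : in_oi a b x -> (quot_deriv_neg f g x <-> g' x * H_fg f g f' g' x < 0).
Proof. intros Hx. pose proof (Hgp x Hx). assert (0 < (g x)²) by (unfold Rsqr; nra).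
  pose proof (Rinv_0_lt_compat _ H0).
  split.
  - intros [l [Hl Hp]]. rewrite (uniqueness_limite _ _ _ _ Hl (qd x Hx)) in Hp.
    unfold Rdiv in Hp. nra.
  - intros Hp. exists (g' x * H_fg f g f' g' x / (g x)²); split; [apply qd; auto|].
    unfold Rdiv; nra. Qed.
End D.
Lemma allT a b (P Q : R -> Prop) : (forall x, in_oi a b x -> (P x <-> Q x)) ->
  ((forall x, in_oi a b x -> P x) <-> (forall x, in_oi a b x -> Q x)).
Proof. intros E; split; intros H x Hx; apply E; auto. Qed.

Lemma exT a b (P1 Q1 P2 Q2 : R -> Prop) :
  (forall x, in_oi a b x -> (P1 x <-> P2 x)) -> (forall x, in_oi a b x -> (Q1 x <-> Q2 x)) ->
  (exists! x0, in_oi a b x0 /\ (forall x, ER_lt a (Fin x) -> x < x0 -> P1 x) /\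
     (forall x, x0 < x -> ER_lt (Fin x) b -> Q1 x)) ->
  (exists! x0, in_oi a b x0 /\ (forall x, ER_lt a (Fin x) -> x < x0 -> P2 x) /\
     (forall x, x0 < x -> ER_lt (Fin x) b -> Q2 x)).
Proof. intros EP EQ [x0 [[Hx0 [L R]] U]]. exists x0; split.
  - split; auto; split.
    + intros x A B. assert (in_oi a b x) by (split; auto; apply lt_b_trans with x0; [apply Hx0|lra]).
      apply EP; auto.
    + intros x A B. assert (in_oi a b x) by (split; auto; apply lt_a_trans with x0; [apply Hx0|lra]).
      apply EQ; auto.
  - intros x1 [Hx1 [L1 R1]]. apply U; split; auto; split.
    + intros x A B. assert (in_oi a b x) by (split; auto; apply lt_b_trans with x1; [apply Hx1|lra]).
      apply EP; auto.
    + intros x A B. assert (in_oi a b x) by (split; auto; apply lt_a_trans with x1; [apply Hx1|lra]).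
      apply EQ; auto.
Qed.

Theorem mainTheorem2 (a b : ER) (f g f' g' : R -> R) (LA LB : ER) :
  ER_lt a b ->
  (forall x, in_oi a b x -> derivable_pt_lim f x (f' x)) ->
  (forall x, in_oi a b x -> derivable_pt_lim g x (g' x)) ->
  (forall x, in_oi a b x -> g' x <> 0) ->
  (forall x, in_oi a b x -> 0 < g x) ->
  (strict_incr_on a b (fun x => f' x / g' x) \/ strict_decr_on a b (fun x => f' x / g' x)) ->
  lim_a_plus a b (H_fg f g f' g') LA ->
  lim_b_minus a b (H_fg f g f' g') LB ->
  (* (i) *)
  ((forall x, in_oi a b x -> 0 < g' x) ->
     ((forall x, in_oi a b x -> quot_deriv_pos f g x) <->
      (ER_le (Fin 0) LA /\ ER_le (Fin 0) LB))) /\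
  ((forall x, in_oi a b x -> g' x < 0) ->
     ((forall x, in_oi a b x -> quot_deriv_neg f g x) <->
      (ER_le (Fin 0) LA /\ ER_le (Fin 0) LB))) /\
  (* (ii) *)
  ((forall x, in_oi a b x -> 0 < g' x) ->
     ((forall x, in_oi a b x -> quot_deriv_neg f g x) <->
      (ER_le LA (Fin 0) /\ ER_le LB (Fin 0)))) /\
  ((forall x, in_oi a b x -> g' x < 0) ->
     ((forall x, in_oi a b x -> quot_deriv_pos f g x) <->
      (ER_le LA (Fin 0) /\ ER_le LB (Fin 0)))) /\
  (* (iii) *)
  ((strict_incr_on a b (fun x => f' x / g' x) -> ER_lt LA (Fin 0) -> ER_lt (Fin 0) LB ->
    ((forall x, in_oi a b x -> 0 < g' x) ->
      exists! x0, in_oi a b x0 /\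
        (forall x, ER_lt a (Fin x) -> x < x0 -> quot_deriv_neg f g x) /\
        (forall x, x0 < x -> ER_lt (Fin x) b -> quot_deriv_pos f g x)) /\
    ((forall x, in_oi a b x -> g' x < 0) ->
      exists! x0, in_oi a b x0 /\
        (forall x, ER_lt a (Fin x) -> x < x0 -> quot_deriv_pos f g x) /\
        (forall x, x0 < x -> ER_lt (Fin x) b -> quot_deriv_neg f g x)))) /\
  (* (iv) *)
  ((strict_decr_on a b (fun x => f' x / g' x) -> ER_lt (Fin 0) LA -> ER_lt LB (Fin 0) ->
    ((forall x, in_oi a b x -> 0 < g' x) ->
      exists! x0, in_oi a b x0 /\
        (forall x, ER_lt a (Fin x) -> x < x0 -> quot_deriv_pos f g x) /\
        (forall x, x0 < x -> ER_lt (Fin x) b -> quot_deriv_neg f g x)) /\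
    ((forall x, in_oi a b x -> g' x < 0) ->
      exists! x0, in_oi a b x0 /\
        (forall x, ER_lt a (Fin x) -> x < x0 -> quot_deriv_neg f g x) /\
        (forall x, x0 < x -> ER_lt (Fin x) b -> quot_deriv_pos f g x)))).
Proof.
  intros Hab Hf Hg Hg0 Hgp Hmon HA HB.
  set (h := H_fg f g f' g') in *.
  assert (Hm : strict_incr_on a b h \/ strict_decr_on a b h).
  { destruct Hmon; [left; apply H_incr|right; apply H_decr]; auto. }
  pose proof (sgn_pos a b f g f' g' Hf Hg Hg0 Hgp) as SP.
  pose proof (sgn_neg a b f g f' g' Hf Hg Hg0 Hgp) as SN.
  fold h in SP, SN.
  assert (PP : (forall x, in_oi a b x -> 0 < g' x) -> forall x, in_oi a b x ->
     (quot_deriv_pos f g x <-> 0 < h x) /\ (quot_deriv_neg f g x <-> h x < 0)).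
  { intros Hs x Hx. rewrite (SP x Hx), (SN x Hx). specialize (Hs x Hx). split; split; intros; nra. }
  assert (NN : (forall x, in_oi a b x -> g' x < 0) -> forall x, in_oi a b x ->
     (quot_deriv_pos f g x <-> h x < 0) /\ (quot_deriv_neg f g x <-> 0 < h x)).
  { intros Hs x Hx. rewrite (SP x Hx), (SN x Hx). specialize (Hs x Hx). split; split; intros; nra. }
  split; [|split; [|split; [|split; [|split]]]].
  - intros Hs. rewrite <- (K1 a b h LA LB Hm HA HB). apply allT. intros; apply PP; auto.
  - intros Hs. rewrite <- (K1 a b h LA LB Hm HA HB). apply allT. intros; apply NN; auto.
  - intros Hs. rewrite <- (K2 a b h LA LB Hm HA HB). apply allT. intros; apply PP; auto.
  - intros Hs. rewrite <- (K2 a b h LA LB Hm HA HB). apply allT. intros; apply NN; auto.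
  - intros Hi HLA HLB.
    pose proof (K3 a b h (H_incr a b f g f' g' Hf Hg Hg0 Hgp Hi)
       (nearA_neg a b h LA HA HLA) (nearB_pos a b h LB HB HLB)) as K.
    split; intros Hs; (eapply exT; [| |exact K]); intros x Hx;
      [apply iff_sym, PP|apply iff_sym, PP|apply iff_sym, NN|apply iff_sym, NN]; auto.
  - intros Hi HLA HLB.
    pose proof (K4 a b h (H_decr a b f g f' g' Hf Hg Hg0 Hgp Hi)
       (nearA_pos a b h LA HA HLA) (nearB_neg a b h LB HB HLB)) as K.
    split; intros Hs; (eapply exT; [| |exact K]); intros x Hx;
      [apply iff_sym, PP|apply iff_sym, PP|apply iff_sym, NN|apply iff_sym, NN]; auto.
Qed.
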